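(* Let $\omega=-\frac12+i\frac{\sqrt3}{2}$ and let the Eisenstein lattice be $\{m+n\omega : m,n\in\mathbb{Z}\}\subset\mathbb{C}$. Up to Euclidean motions (isometries of the plane), there are exactly two equable triangles whose vertices all lie on the Eisenstein lattice. They are realized by the following vertices: (a) $A=8+4\omega$, $B=4+8\omega$, $C=0$; (b) $A=6+3\omega$, $B=8+16\omega$, $C=0$.
   Context: A triangle is a non-degenerate triangle in the plane $\mathbb{C}\cong\mathbb{R}^2$. A triangle is called equable if its perimeter equals its area (as real numbers). *)

(* Defs.v *)
(* the plane C ≅ R^2 is modelled as R * R (x = Re, y = Im). *)
From Stdlib Require Import Reals Lra ZArith List Permutation.
Open Scope R_scope.

Definition point := (R * R)%type.

Definition dist (p q : point) : R :=
  sqrt ((fst p - fst q) ^ 2 + (snd p - snd q) ^ 2).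

(* omega = -1/2 + i sqrt(3)/2; the point m + n*omega *)
Definition eis (m n : Z) : point :=
  (IZR m - IZR n / 2, IZR n * sqrt 3 / 2).

Definition on_eisenstein (p : point) : Prop :=
  exists m n : Z, p = eis m n.

Definition cross (A B C : point) : R :=
  (fst B - fst A) * (snd C - snd A) - (snd B - snd A) * (fst C - fst A).

Definition nondegenerate (A B C : point) : Prop := cross A B C <> 0.

Definition perimeter (A B C : point) : R := dist A B + dist B C + dist C A.

Definition area (A B C : point) : R := Rabs (cross A B C) / 2.

Definition equable (A B C : point) : Prop :=
  nondegenerate A B C /\ perimeter A B C = area A B C.

Definition isometry (f : point -> point) : Prop :=
  forall p q, dist (f p) (f q) = dist p q.

(* Triangles (as unordered vertex triples) congruent by a Euclidean motion *)
Definition congruent (A B C A' B' C' : point) : Prop :=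
  exists f : point -> point, isometry f /\
    Permutation (f A :: f B :: f C :: nil) (A' :: B' :: C' :: nil).

Definition eis_triangle (A B C : point) : Prop :=
  on_eisenstein A /\ on_eisenstein B /\ on_eisenstein C.

(* Main.v *)
Require Import Defs.
From Stdlib Require Import Reals ZArith List Permutation.
From Stdlib Require Import Nsatz Znumtheory Lia Lra Psatz.
Open Scope R_scope.

Lemma int_sq (M K n : Z) : K <> 0%Z -> (M*M = n*(K*K))%Z -> exists j, n = (j*j)%Z.
Proof.
  intros HK H.
  set (g := Z.gcd M K).
  assert (Hg0 : g <> 0%Z). { intro E. apply HK. apply (Z.gcd_eq_0_r M K). exact E. }
  assert (Hgc : Z.gcd (M / g) (K / g) = 1%Z) by (apply Z.gcd_div_gcd; auto).
  destruct (Z.gcd_divide_l M K) as [m Hm].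
  destruct (Z.gcd_divide_r M K) as [k Hk].
  fold g in Hm, Hk.
  assert (E1 : (M / g = m)%Z) by (rewrite Hm; apply Z.div_mul; auto).
  assert (E2 : (K / g = k)%Z) by (rewrite Hk; apply Z.div_mul; auto).
  rewrite E1, E2 in Hgc.
  assert (Hmk : (m*m = n*(k*k))%Z).
  { apply (Z.mul_reg_l _ _ (g*g)). nia. rewrite Hm, Hk in H. nia. }
  assert (Hd : (k | m*m)%Z) by (exists (n*k)%Z; lia).
  assert (Hr : rel_prime k m) by (apply rel_prime_sym; apply Zgcd_1_rel_prime; auto).
  pose proof (Gauss _ _ _ Hd Hr) as Hkm.
  assert (Hk1 : (k | 1)%Z).
  { rewrite <- Hgc. apply Z.gcd_greatest; auto. apply Z.divide_refl. }
  apply Z.divide_1_r in Hk1.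
  exists m. destruct Hk1; subst k; lia.
Qed.

Lemma three_sq (n j : Z) : (0 < n)%Z -> (3*n = j*j)%Z -> exists k, (0 < k)%Z /\ n = (3*k*k)%Z.
Proof.
  intros Hn H.
  pose proof (Z_div_mod_eq_full j 3) as Hd.
  pose proof (Z.mod_pos_bound j 3 ltac:(lia)) as Hb.
  set (a := (j / 3)%Z) in *. set (r := (j mod 3)%Z) in *.
  assert (r = 0 \/ r = 1 \/ r = 2)%Z as [Hr|[Hr|Hr]] by lia; rewrite Hr in Hd.
  - exists (Z.abs a). split.
    + destruct (Z.abs_spec a) as [[? ?]|[? ?]]; nia.
    + destruct (Z.abs_spec a) as [[? E]|[? E]]; rewrite E; nia.
  - exfalso. rewrite Hd in H. nia.
  - exfalso. rewrite Hd in H. nia.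
Qed.

Lemma sqrt_3kk (k : Z) : (0 < k)%Z -> sqrt (IZR (3*k*k)) = IZR k * sqrt 3.
Proof.
  intros Hk. rewrite <- Z.mul_assoc, mult_IZR, mult_IZR.
  assert (0 < IZR k) by (apply IZR_lt; auto).
  rewrite sqrt_mult by nra. rewrite sqrt_square by lra. ring.
Qed.

Lemma key_sqrt (n1 n2 n3 Q : Z) : (0 < n1)%Z -> (0 < n2)%Z -> (0 < n3)%Z -> (0 < Q)%Z ->
  4 * (sqrt (IZR n1) + sqrt (IZR n2) + sqrt (IZR n3)) = sqrt 3 * IZR Q ->
  exists k, (0 < k)%Z /\ n3 = (3*k*k)%Z.
Proof.
  intros H1 H2 H3 HQ E.
  set (x := sqrt (IZR n1)) in *. set (y := sqrt (IZR n2)) in *.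
  set (z := sqrt (IZR n3)) in *. set (t := sqrt 3) in *.
  assert (Hx : x*x = IZR n1) by (apply sqrt_sqrt; apply IZR_le; lia).
  assert (Hy : y*y = IZR n2) by (apply sqrt_sqrt; apply IZR_le; lia).
  assert (Hz : z*z = IZR n3) by (apply sqrt_sqrt; apply IZR_le; lia).
  assert (Ht : t*t = 3) by (apply sqrt_sqrt; lra).
  assert (px : 0 < x) by (apply sqrt_lt_R0; apply IZR_lt; lia).
  assert (py : 0 < y) by (apply sqrt_lt_R0; apply IZR_lt; lia).
  assert (pz : 0 < z) by (apply sqrt_lt_R0; apply IZR_lt; lia).
  assert (pt : 0 < t) by (apply sqrt_lt_R0; lra).
  assert (pQ : 0 < IZR Q) by (apply IZR_lt; lia).
  set (RR := (3*Q*Q + 16*(n3-n1-n2))%Z).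
  set (MM := (RR*RR + 192*Q*Q*n3 - 1024*n1*n2)%Z).
  assert (C1 : 32*x*y = IZR RR - 8*IZR Q*z*t).
  { unfold RR. repeat rewrite ?plus_IZR, ?minus_IZR, ?mult_IZR. clearbody x y z t. clear -E Hx Hy Hz Ht. nsatz. }
  destruct (Z.eq_dec RR 0) as [HR|HR].
  - exfalso. rewrite HR in C1.
    assert (0 < x*y) by nra. assert (0 < IZR Q * z * t).
    { apply Rmult_lt_0_compat; auto. apply Rmult_lt_0_compat; auto. }
    lra.
  - assert (C2 : 16*IZR RR*IZR Q*(z*t) = IZR MM).
    { unfold MM. repeat rewrite ?plus_IZR, ?minus_IZR, ?mult_IZR. clearbody x y z t RR.
      clear -C1 Hx Hy Hz Ht. nsatz. }
    assert (C3 : IZR (MM*MM) = IZR (3*n3*((16*RR*Q)*(16*RR*Q)))).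
    { rewrite ?mult_IZR. rewrite <- C2. rewrite ?mult_IZR.
      clearbody x y z t RR MM. clear -Hz Ht. nsatz. }
    apply eq_IZR in C3.
    apply int_sq in C3 as [j Hj]; [| lia].
    apply (three_sq n3 j); auto.
Qed.
Definition nrm (p q : Z) : Z := (p*p - p*q + q*q)%Z.

Lemma s3sq : sqrt 3 * sqrt 3 = 3.
Proof. apply sqrt_sqrt; lra. Qed.

Lemma dist_eis a b c d : Defs.dist (eis a b) (eis c d) = sqrt (IZR (nrm (a-c) (b-d))).
Proof.
  unfold Defs.dist, eis, nrm; simpl. f_equal.
  repeat rewrite ?plus_IZR, ?minus_IZR, ?mult_IZR.
  pose proof s3sq as H. set (t := sqrt 3) in *. clearbody t.
  match goal with |- ?L = ?R => assert (E : L - R = (t*t-3)*(IZR b - IZR d)^2/4) by field end.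
  rewrite H in E. lra.
Qed.

Lemma cross_eis a1 a2 b1 b2 c1 c2 : cross (eis a1 a2) (eis b1 b2) (eis c1 c2) =
  sqrt 3 / 2 * IZR ((b1-a1)*(c2-a2) - (b2-a2)*(c1-a1)).
Proof.
  unfold cross, eis; simpl.
  repeat rewrite ?plus_IZR, ?minus_IZR, ?mult_IZR. field.
Qed.

Definition rot (A A' : point) (a b L2 : R) (p : point) : point :=
  (fst A' + (a * (fst p - fst A) - b * (snd p - snd A)) / L2,
   snd A' + (b * (fst p - fst A) + a * (snd p - snd A)) / L2).

Lemma dist_sq (p q p' q' : point) :
  (fst p - fst q)^2 + (snd p - snd q)^2 = (fst p' - fst q')^2 + (snd p' - snd q')^2 ->
  Defs.dist p q = Defs.dist p' q'.
Proof. intros H. unfold Defs.dist. rewrite H. reflexivity. Qed.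

Lemma dist_sq_inv (p q p' q' : point) : Defs.dist p q = Defs.dist p' q' ->
  (fst p - fst q)^2 + (snd p - snd q)^2 = (fst p' - fst q')^2 + (snd p' - snd q')^2.
Proof.
  unfold Defs.dist. intros H.
  apply sqrt_inj; auto; apply Rplus_le_le_0_compat; apply pow2_ge_0.
Qed.

Lemma rot_aux a b L2 x y : L2 <> 0 -> a*a + b*b = L2*L2 ->
  ((a*x - b*y)/L2)^2 + ((b*x+a*y)/L2)^2 = x^2+y^2.
Proof.
  intros HL H.
  replace (((a*x - b*y)/L2)^2 + ((b*x+a*y)/L2)^2) with ((a*a+b*b)*(x^2+y^2)/(L2*L2)) by (field; auto).
  rewrite H. field. auto.
Qed.

Lemma rot_iso A A' a b L2 : L2 <> 0 -> a*a + b*b = L2*L2 -> isometry (rot A A' a b L2).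
Proof.
  intros HL H p q. apply dist_sq. unfold rot; cbn [fst snd].
  rewrite <- (rot_aux a b L2 (fst p - fst q) (snd p - snd q)) by auto.
  f_equal; f_equal; field; auto.
Qed.

Lemma sss_pos (a1 a2 b1 b2 c1 c2 a1' a2' b1' b2' c1' c2' : R) :
  let u1 := b1 - a1 in let u2 := b2 - a2 in let w1 := c1 - a1 in let w2 := c2 - a2 in
  let u1' := b1' - a1' in let u2' := b2' - a2' in let w1' := c1' - a1' in let w2' := c2' - a2' in
  u1*u1 + u2*u2 <> 0 ->
  u1*u1 + u2*u2 = u1'*u1' + u2'*u2' ->
  u1*w1 + u2*w2 = u1'*w1' + u2'*w2' ->
  u1*w2 - u2*w1 = u1'*w2' - u2'*w1' ->
  exists f, isometry f /\ f (a1,a2) = (a1',a2') /\ f (b1,b2) = (b1',b2') /\ f (c1,c2) = (c1',c2').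
Proof.
  intros u1 u2 w1 w2 u1' u2' w1' w2' HL HN Hd Hc.
  set (L2 := u1*u1+u2*u2) in *.
  exists (rot (a1,a2) (a1',a2') (u1*u1'+u2*u2') (u1*u2'-u2*u1') L2).
  assert (HS : (u1*u1'+u2*u2')*(u1*u1'+u2*u2') + (u1*u2'-u2*u1')*(u1*u2'-u2*u1') = L2*L2).
  { rewrite HN at 2. unfold L2. ring. }
  split; [apply rot_iso; auto|].
  unfold rot; cbn [fst snd].
  fold u1 u2 w1 w2.
  split; [|split].
  - f_equal; field; auto.
  - f_equal.
    + replace ((u1 * u1' + u2 * u2') * u1 - (u1 * u2' - u2 * u1') * u2) with (L2 * u1') by (unfold L2; ring).
      unfold u1'. field. auto.
    + replace ((u1 * u2' - u2 * u1') * u1 + (u1 * u1' + u2 * u2') * u2) with (L2 * u2') by (unfold L2; ring).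
      unfold u2'. field. auto.
  - assert (E1 : L2 * ((u1 * u1' + u2 * u2') * w1 - (u1 * u2' - u2 * u1') * w2 - L2 * w1') = 0).
    { assert (HLd : L2 = u1*u1+u2*u2) by reflexivity. clearbody L2 u1 u2 w1 w2 u1' u2' w1' w2'. clear -HLd HN Hd Hc. nsatz. }
    assert (E2 : L2 * ((u1 * u2' - u2 * u1') * w1 + (u1 * u1' + u2 * u2') * w2 - L2 * w2') = 0).
    { assert (HLd : L2 = u1*u1+u2*u2) by reflexivity. clearbody L2 u1 u2 w1 w2 u1' u2' w1' w2'. clear -HLd HN Hd Hc. nsatz. }
    apply Rmult_integral in E1. apply Rmult_integral in E2.
    destruct E1 as [E1|E1]; [contradiction|]. destruct E2 as [E2|E2]; [contradiction|].
    f_equal.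
    + replace ((u1 * u1' + u2 * u2') * w1 - (u1 * u2' - u2 * u1') * w2) with (L2 * w1') by lra.
      unfold w1'. field. auto.
    + replace ((u1 * u2' - u2 * u1') * w1 + (u1 * u1' + u2 * u2') * w2) with (L2 * w2') by lra.
      unfold w2'. field. auto.
Qed.

Lemma sss (A B C X Y Z : point) : nondegenerate A B C ->
  Defs.dist A B = Defs.dist X Y -> Defs.dist B C = Defs.dist Y Z -> Defs.dist C A = Defs.dist Z X ->
  exists f, isometry f /\ f A = X /\ f B = Y /\ f C = Z.
Proof.
  destruct A as [a1 a2], B as [b1 b2], C as [c1 c2], X as [x1 x2], Y as [y1 y2], Z as [z1 z2].
  unfold nondegenerate, cross; cbn [fst snd].
  intros ND H1 H2 H3.
  apply dist_sq_inv in H1, H2, H3; cbn [fst snd] in H1, H2, H3.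
  assert (HL : (b1-a1)*(b1-a1) + (b2-a2)*(b2-a2) <> 0).
  { intro E. destruct (Rplus_sqr_eq_0 (b1-a1) (b2-a2)) as [H H0]; [unfold Rsqr; exact E|].
    apply ND. rewrite H, H0. ring. }
  simpl in H1, H2, H3.
  assert (HN : (b1-a1)*(b1-a1) + (b2-a2)*(b2-a2) = (y1-x1)*(y1-x1) + (y2-x2)*(y2-x2)) by (clear -H1; nsatz).
  assert (Hd : (b1-a1)*(c1-a1) + (b2-a2)*(c2-a2) = (y1-x1)*(z1-x1) + (y2-x2)*(z2-x2)) by (clear -H1 H2 H3; nsatz).
  assert (Hc2 : ((b1-a1)*(c2-a2) - (b2-a2)*(c1-a1))*((b1-a1)*(c2-a2) - (b2-a2)*(c1-a1)) =
                ((y1-x1)*(z2-x2) - (y2-x2)*(z1-x1))*((y1-x1)*(z2-x2) - (y2-x2)*(z1-x1))) by (clear -HN Hd H3; nsatz).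
  assert (Hc : ((b1-a1)*(c2-a2) - (b2-a2)*(c1-a1) - ((y1-x1)*(z2-x2) - (y2-x2)*(z1-x1))) *
               ((b1-a1)*(c2-a2) - (b2-a2)*(c1-a1) + ((y1-x1)*(z2-x2) - (y2-x2)*(z1-x1))) = 0) by lra.
  apply Rmult_integral in Hc. destruct Hc as [Hc|Hc].
  - apply (sss_pos a1 a2 b1 b2 c1 c2 x1 x2 y1 y2 z1 z2); simpl; auto; lra.
  - destruct (sss_pos a1 (-a2) b1 (-b2) c1 (-c2) x1 x2 y1 y2 z1 z2) as [g [Hg [Ga [Gb Gc]]]];
      simpl; try lra.
    exists (fun p => g (fst p, - snd p)). cbn [fst snd]. split; [|auto].
    intros p q. rewrite Hg. apply dist_sq. cbn [fst snd]. ring.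
Qed.

Open Scope Z_scope.
Lemma uvw_sorted u v w a b c : 0 < u -> u <= v -> v <= w -> 3*u*v*w = 16*(u+v+w) ->
  u + v = 2*c -> v + w = 2*a -> u + w = 2*b ->
  (u = 4 /\ v = 4 /\ w = 4) \/ (u = 2 /\ v = 4 /\ w = 12).
Proof.
  intros Hu Huv Hvw E Hc Ha Hb.
  assert (H1 : w*(3*(u*v)) <= w*48) by lia.
  assert (Huv16 : 3*(u*v) <= 48) by (apply (Z.mul_le_mono_pos_l _ _ w); lia).
  assert (u*u <= u*v) by (apply Z.mul_le_mono_pos_l; lia).
  assert (u <= 4).
  { destruct (Z_le_gt_dec u 4) as [h|h]; auto.
    assert (5*5 <= u*u) by (apply Z.mul_le_mono_nonneg; lia). lia. }
  assert (v <= 16).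
  { assert (1*v <= u*v) by (apply Z.mul_le_mono_nonneg_r; lia). lia. }
  assert (u = 1 \/ u = 2 \/ u = 3 \/ u = 4) as Hu' by lia.
  destruct Hu' as [-> | [-> | [-> | ->]]];
  assert (v = 1 \/ v = 2 \/ v = 3 \/ v = 4 \/ v = 5 \/ v = 6 \/ v = 7 \/ v = 8 \/ v = 9 \/ v = 10 \/ v = 11 \/ v = 12 \/ v = 13 \/ v = 14 \/ v = 15 \/ v = 16) as Hv' by lia;
  repeat (destruct Hv' as [-> | Hv']; [lia|]); lia.
Qed.

Definition kopts (k1 k2 k3 : Z) : Prop :=
  (k1 = 4 /\ k2 = 4 /\ k3 = 4) \/
  (k1 = 3 /\ k2 = 7 /\ k3 = 8) \/ (k1 = 3 /\ k2 = 8 /\ k3 = 7) \/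
  (k1 = 7 /\ k2 = 3 /\ k3 = 8) \/ (k1 = 7 /\ k2 = 8 /\ k3 = 3) \/
  (k1 = 8 /\ k2 = 3 /\ k3 = 7) \/ (k1 = 8 /\ k2 = 7 /\ k3 = 3).

Lemma k_classify k1 k2 k3 :
  0 < k2 + k3 - k1 -> 0 < k1 + k3 - k2 -> 0 < k1 + k2 - k3 ->
  3*(k2+k3-k1)*(k1+k3-k2)*(k1+k2-k3) = 16*(k1+k2+k3) -> kopts k1 k2 k3.
Proof.
  intros Hu Hv Hw E. unfold kopts.
  set (u := k2+k3-k1) in *. set (v := k1+k3-k2) in *. set (w := k1+k2-k3) in *.
  assert (Eu : k1 + k2 + k3 = u + v + w) by (unfold u, v, w; lia).
  rewrite Eu in E.
  assert (Pu : u + v = 2*k3) by (unfold u, v; lia).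
  assert (Pv : v + w = 2*k1) by (unfold v, w; lia).
  assert (Pw : u + w = 2*k2) by (unfold u, w; lia).
  clearbody u v w.
  destruct (Z.le_ge_cases u v); destruct (Z.le_ge_cases v w); destruct (Z.le_ge_cases u w).
  all: first
    [ pose proof (uvw_sorted u v w k1 k2 k3 ltac:(lia) ltac:(lia) ltac:(lia) ltac:(transitivity (3*u*v*w); [ring| rewrite E; ring]) ltac:(lia) ltac:(lia) ltac:(lia)) as HH
    | pose proof (uvw_sorted u w v k1 k3 k2 ltac:(lia) ltac:(lia) ltac:(lia) ltac:(transitivity (3*u*v*w); [ring| rewrite E; ring]) ltac:(lia) ltac:(lia) ltac:(lia)) as HH
    | pose proof (uvw_sorted v u w k2 k1 k3 ltac:(lia) ltac:(lia) ltac:(lia) ltac:(transitivity (3*u*v*w); [ring| rewrite E; ring]) ltac:(lia) ltac:(lia) ltac:(lia)) as HH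
    | pose proof (uvw_sorted v w u k2 k3 k1 ltac:(lia) ltac:(lia) ltac:(lia) ltac:(transitivity (3*u*v*w); [ring| rewrite E; ring]) ltac:(lia) ltac:(lia) ltac:(lia)) as HH
    | pose proof (uvw_sorted w u v k3 k1 k2 ltac:(lia) ltac:(lia) ltac:(lia) ltac:(transitivity (3*u*v*w); [ring| rewrite E; ring]) ltac:(lia) ltac:(lia) ltac:(lia)) as HH
    | pose proof (uvw_sorted w v u k3 k2 k1 ltac:(lia) ltac:(lia) ltac:(lia) ltac:(transitivity (3*u*v*w); [ring| rewrite E; ring]) ltac:(lia) ltac:(lia) ltac:(lia)) as HH ].
  all: assert (K1 : k1 = (v+w)/2) by (rewrite Pv, Z.mul_comm, Z.div_mul; lia).
  all: assert (K2 : k2 = (u+w)/2) by (rewrite Pw, Z.mul_comm, Z.div_mul; lia).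
  all: assert (K3 : k3 = (u+v)/2) by (rewrite Pu, Z.mul_comm, Z.div_mul; lia).
  all: clear E Pu Pv Pw Eu; subst k1 k2 k3.
  all: destruct HH as [[-> [-> ->]]|[-> [-> ->]]].
  all: repeat (first [left; split; [reflexivity|split; reflexivity] | right; try (split; [reflexivity|split; reflexivity])]).
Qed.

Lemma pos_uvw u v w : 0 < u+v -> 0 < v+w -> 0 < u+w -> 0 < u*v*w -> 0<u /\ 0<v /\ 0<w.
Proof.
  intros. destruct (Z_lt_le_dec 0 u), (Z_lt_le_dec 0 v), (Z_lt_le_dec 0 w); try lia.
Qed.
Lemma fin k1 k2 k3 : 0 < k1 -> 0 < k2 -> 0 < k3 ->
  2 * (3*k1*k1 * (3*k2*k2) + 3*k2*k2 * (3*k3*k3) + 3*k3*k3 * (3*k1*k1)) -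
      (3*k1*k1 * (3*k1*k1) + 3*k2*k2 * (3*k2*k2) + 3*k3*k3 * (3*k3*k3)) =
      3 * (4 * (k1 + k2 + k3) * (4 * (k1 + k2 + k3))) ->
  3*(k2+k3-k1)*(k1+k3-k2)*(k1+k2-k3) = 16*(k1+k2+k3).
Proof.
  intros K1 K2 K3 Her.
  set (P := k1+k2+k3).
  assert (F : 3*P*(3*(k2+k3-k1)*(k1+k3-k2)*(k1+k2-k3) - 16*P) = 0).
  { match type of Her with ?L = ?R => transitivity (L - R) end.
    - unfold P. ring.
    - rewrite Her. ring. }
  apply Z.mul_eq_0 in F. destruct F as [F|F]; [unfold P in F; lia|]. lia.
Qed.

Lemma nrm_pos p q : nrm p q <= 0 -> p = 0 /\ q = 0.
Proof. unfold nrm. intros H. assert (4*(p*p-p*q+q*q) = (2*p-q)*(2*p-q) + 3*(q*q)) by ring. nia. Qed.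

Open Scope R_scope.

Lemma classify a1 a2 b1 b2 c1 c2 : equable (eis a1 a2) (eis b1 b2) (eis c1 c2) ->
  exists k1 k2 k3, nrm (a1-b1) (a2-b2) = (3*k1*k1)%Z /\ nrm (b1-c1) (b2-c2) = (3*k2*k2)%Z /\
    nrm (c1-a1) (c2-a2) = (3*k3*k3)%Z /\ kopts k1 k2 k3.
Proof.
  unfold equable, nondegenerate, perimeter, area.
  rewrite !dist_eis, cross_eis. intros [ND E].
  set (D := ((b1-a1)*(c2-a2) - (b2-a2)*(c1-a1))%Z) in *.
  assert (HD : D <> 0%Z). { intro H. apply ND. rewrite H. simpl. ring. }
  set (n1 := nrm (a1-b1) (a2-b2)) in *.
  set (n2 := nrm (b1-c1) (b2-c2)) in *.
  set (n3 := nrm (c1-a1) (c2-a2)) in *.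
  assert (P1 : (0 < n1)%Z).
  { destruct (Z_lt_le_dec 0 n1) as [h|h]; auto. apply nrm_pos in h as [h1 h2].
    exfalso. apply HD. unfold D. assert (b1 = a1) by lia. assert (b2 = a2) by lia. subst. ring. }
  assert (P2 : (0 < n2)%Z).
  { destruct (Z_lt_le_dec 0 n2) as [h|h]; auto. apply nrm_pos in h as [h1 h2].
    exfalso. apply HD. unfold D. assert (c1 = b1) by lia. assert (c2 = b2) by lia. subst. ring. }
  assert (P3 : (0 < n3)%Z).
  { destruct (Z_lt_le_dec 0 n3) as [h|h]; auto. apply nrm_pos in h as [h1 h2].
    exfalso. apply HD. unfold D. assert (c1 = a1) by lia. assert (c2 = a2) by lia. subst. ring. }
  assert (Hab : Rabs (sqrt 3 / 2 * IZR D) = sqrt 3 / 2 * IZR (Z.abs D)).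
  { rewrite Rabs_mult, abs_IZR. f_equal. apply Rabs_pos_eq.
    pose proof (sqrt_pos 3). lra. }
  rewrite Hab in E. clear Hab.
  assert (PQ : (0 < Z.abs D)%Z) by lia.
  assert (E' : 4 * (sqrt (IZR n1) + sqrt (IZR n2) + sqrt (IZR n3)) = sqrt 3 * IZR (Z.abs D)) by lra.
  destruct (key_sqrt n1 n2 n3 (Z.abs D)) as [k3 [K3 N3]]; auto.
  destruct (key_sqrt n2 n3 n1 (Z.abs D)) as [k1 [K1 N1]]; auto. rewrite <- E'. ring.
  destruct (key_sqrt n3 n1 n2 (Z.abs D)) as [k2 [K2 N2]]; auto. rewrite <- E'. ring.
  exists k1, k2, k3. split; [auto|split; [auto|split;[auto|]]].
  rewrite N1, N2, N3, !sqrt_3kk in E' by auto.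
  assert (E2 : IZR (4*(k1+k2+k3)) = IZR (Z.abs D)).
  { apply (Rmult_eq_reg_r (sqrt 3)).
    - rewrite mult_IZR, !plus_IZR. lra.
    - pose proof (sqrt_lt_R0 3 ltac:(lra)). lra. }
  apply eq_IZR in E2.
  assert (Her : (2*(n1*n2+n2*n3+n3*n1) - (n1*n1+n2*n2+n3*n3) = 3*(D*D))%Z).
  { unfold n1, n2, n3, D, nrm. ring. }
  assert (DD : (D*D = Z.abs D * Z.abs D)%Z) by (destruct (Z.abs_spec D) as [[_ h]|[_ h]]; rewrite h; ring).
  rewrite DD, <- E2, N1, N2, N3 in Her.
  apply fin in Her; auto.
  destruct (pos_uvw (k2+k3-k1) (k1+k3-k2) (k1+k2-k3)) as [? [? ?]]; try lia.
  apply k_classify; auto.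
Qed.

Lemma cong_case a1 a2 b1 b2 c1 c2 x1 x2 y1 y2 z1 z2 :
  nondegenerate (eis a1 a2) (eis b1 b2) (eis c1 c2) ->
  nrm (a1-b1) (a2-b2) = nrm (x1-y1) (x2-y2) ->
  nrm (b1-c1) (b2-c2) = nrm (y1-z1) (y2-z2) ->
  nrm (c1-a1) (c2-a2) = nrm (z1-x1) (z2-x2) ->
  exists f, isometry f /\ f (eis a1 a2) = eis x1 x2 /\ f (eis b1 b2) = eis y1 y2 /\ f (eis c1 c2) = eis z1 z2.
Proof.
  intros ND H1 H2 H3. apply sss; auto; rewrite !dist_eis; f_equal; f_equal; auto.
Qed.

Lemma dist_k a b c d k : nrm (a-c) (b-d) = (3*k*k)%Z -> (0 < k)%Z ->
  Defs.dist (eis a b) (eis c d) = IZR k * sqrt 3.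
Proof. intros H Hk. rewrite dist_eis, H. apply sqrt_3kk; auto. Qed.

Lemma sqrt_IZR_inj m n : sqrt (IZR m) = sqrt (IZR n) -> (0 <= m)%Z -> (0 <= n)%Z -> m = n.
Proof.
  intros H Hm Hn. apply eq_IZR. apply sqrt_inj; auto; apply IZR_le; auto.
Qed.

Lemma in3 (x a b c : point) : In x (a :: b :: c :: nil) -> x = a \/ x = b \/ x = c.
Proof. simpl. intuition. Qed.

Section P.
Variables x y z : point.
Lemma p_xyz : Permutation (x :: y :: z :: nil) (x :: y :: z :: nil). Proof. apply Permutation_refl. Qed.
Lemma p_yxz : Permutation (y :: x :: z :: nil) (x :: y :: z :: nil). Proof. apply perm_swap. Qed.
Lemma p_xzy : Permutation (x :: z :: y :: nil) (x :: y :: z :: nil). Proof. apply perm_skip, perm_swap. Qed.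
Lemma p_yzx : Permutation (y :: z :: x :: nil) (x :: y :: z :: nil).
Proof. eapply perm_trans; [apply perm_skip, perm_swap|apply perm_swap]. Qed.
Lemma p_zxy : Permutation (z :: x :: y :: nil) (x :: y :: z :: nil).
Proof. eapply perm_trans; [apply perm_swap|apply perm_skip, perm_swap]. Qed.
Lemma p_zyx : Permutation (z :: y :: x :: nil) (x :: y :: z :: nil).
Proof. eapply perm_trans; [apply perm_swap|]. eapply perm_trans; [apply perm_skip, perm_swap|apply perm_swap]. Qed.
End P.

Theorem mainTheorem1 :
  (* both listed triangles are equable Eisenstein-lattice triangles *)
  equable (eis 8 4) (eis 4 8) (eis 0 0) /\
  equable (eis 6 3) (eis 8 16) (eis 0 0) /\
  (* they are not related by a Euclidean motion *)
  ~ congruent (eis 8 4) (eis 4 8) (eis 0 0) (eis 6 3) (eis 8 16) (eis 0 0) /\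
  (* every equable Eisenstein-lattice triangle is congruent to one of them *)
  (forall A B C : point,
     eis_triangle A B C -> equable A B C ->
     congruent A B C (eis 8 4) (eis 4 8) (eis 0 0) \/
     congruent A B C (eis 6 3) (eis 8 16) (eis 0 0)).
Proof.
  pose proof (sqrt_lt_R0 3 ltac:(lra)) as S3.
  split; [|split; [|split]].
  - split.
    + unfold nondegenerate. rewrite cross_eis. simpl. nra.
    + unfold perimeter, area. rewrite cross_eis.
      rewrite (dist_k _ _ _ _ 4), (dist_k _ _ _ _ 4), (dist_k _ _ _ _ 4) by reflexivity.
      simpl. rewrite Rabs_pos_eq by nra. lra.
  - split.
    + unfold nondegenerate. rewrite cross_eis. simpl. nra.
    + unfold perimeter, area. rewrite cross_eis.
      rewrite (dist_k _ _ _ _ 7), (dist_k _ _ _ _ 8), (dist_k _ _ _ _ 3) by reflexivity.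
      simpl. rewrite Rabs_pos_eq by nra. lra.
  - intros [f [Hf HP]].
    assert (IA : In (f (eis 8 4)) (eis 6 3 :: eis 8 16 :: eis 0 0 :: nil))
      by (eapply Permutation_in; [exact HP| simpl; auto]).
    assert (IB : In (f (eis 4 8)) (eis 6 3 :: eis 8 16 :: eis 0 0 :: nil))
      by (eapply Permutation_in; [exact HP| simpl; auto]).
    pose proof (Hf (eis 8 4) (eis 4 8)) as HD.
    apply in3 in IA, IB.
    destruct IA as [EA|[EA|EA]]; destruct IB as [EB|[EB|EB]]; rewrite EA, EB, !dist_eis in HD;
      apply sqrt_IZR_inj in HD; vm_compute in HD; discriminate.
  - intros A B C [[a1 [a2 ->]] [[b1 [b2 ->]] [c1 [c2 ->]]]] HE.
    assert (ND := proj1 HE).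
    destruct (classify _ _ _ _ _ _ HE) as [k1 [k2 [k3 [N1 [N2 [N3 K]]]]]].
    unfold kopts in K.
    destruct K as [K|[K|[K|[K|[K|[K|K]]]]]]; destruct K as [-> [-> ->]].
    + left. destruct (cong_case a1 a2 b1 b2 c1 c2 8 4 4 8 0 0) as [f [Hf [E1 [E2 E3]]]]; auto;
        try (rewrite ?N1, ?N2, ?N3; reflexivity).
      exists f. split; auto. rewrite E1, E2, E3. apply p_xyz.
    +
      right. destruct (cong_case a1 a2 b1 b2 c1 c2 0 0 6 3 8 16) as [f [Hf [E1 [E2 E3]]]]; auto;
        try (rewrite ?N1, ?N2, ?N3; reflexivity).
      exists f. split; auto. rewrite E1, E2, E3. apply p_zxy.
    +
      right. destruct (cong_case a1 a2 b1 b2 c1 c2 6 3 0 0 8 16) as [f [Hf [E1 [E2 E3]]]]; auto;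
        try (rewrite ?N1, ?N2, ?N3; reflexivity).
      exists f. split; auto. rewrite E1, E2, E3. apply p_xzy.
    +
      right. destruct (cong_case a1 a2 b1 b2 c1 c2 8 16 6 3 0 0) as [f [Hf [E1 [E2 E3]]]]; auto;
        try (rewrite ?N1, ?N2, ?N3; reflexivity).
      exists f. split; auto. rewrite E1, E2, E3. apply p_yxz.
    +
      right. destruct (cong_case a1 a2 b1 b2 c1 c2 6 3 8 16 0 0) as [f [Hf [E1 [E2 E3]]]]; auto;
        try (rewrite ?N1, ?N2, ?N3; reflexivity).
      exists f. split; auto. rewrite E1, E2, E3. apply p_xyz.
    +
      right. destruct (cong_case a1 a2 b1 b2 c1 c2 8 16 0 0 6 3) as [f [Hf [E1 [E2 E3]]]]; auto;
        try (rewrite ?N1, ?N2, ?N3; reflexivity).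
      exists f. split; auto. rewrite E1, E2, E3. apply p_yzx.
    +
      right. destruct (cong_case a1 a2 b1 b2 c1 c2 0 0 8 16 6 3) as [f [Hf [E1 [E2 E3]]]]; auto;
        try (rewrite ?N1, ?N2, ?N3; reflexivity).
      exists f. split; auto. rewrite E1, E2, E3. apply p_zyx.
Qed.
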